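(* Let $G=(V,E)$ be a connected, locally finite graph and let $\sigma^0\in\{-1,+1\}^V$. Let $\gamma$ be a finite contour with respect to $\sigma^0$, and let $\sigma\in\{-1,+1\}^V$ be the configuration with $\sigma_v=-\sigma^0_v$ for $v\in V(\gamma)$ and $\sigma_v=\sigma^0_v$ for $v\notin V(\gamma)$. Then $$H(\sigma)-H(\sigma^0)\ \geq\ \big({\rm IC}_G-2\,\delta_{\rm broken}(\sigma^0)\big)\,|\gamma|,$$ where $H(\sigma)-H(\sigma^0):=\sum_{\{v,w\}\in E}\big(\mathbf 1_{\sigma_v\neq\sigma_w}-\mathbf 1_{\sigma^0_v\neq\sigma^0_w}\big)$ (a finite sum, since only edges with an endpoint in $V(\gamma)$ contribute).
   Context: A contour with respect to $\sigma^0$ is a connected subgraph $\gamma$ of $G$ (on which the configuration is taken to be flipped relative to $\sigma^0$). $|\gamma|$ denotes the number of vertices of $\gamma$. For a finite subgraph $H$, $\partial H$ is the set of edges $(v,w)\in E$ with $v\in V(H)$, $w\notin V(H)$, and the isoperimetric constant is ${\rm IC}_G=\inf\{|\partial H|/|H|: H \text{ finite non-empty subgraph of }G\}$. For a configuration $\eta$, its broken bonds are the edges $\{v,w\}$ with $\eta_v\eta_w=-1$, and $\delta_{\rm broken}(\eta)$ is the maximum degree of a vertex in the subgraph formed by the broken bonds, i.e. the maximal number of broken bonds incident to a single vertex. *)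

(* Defs.v *)
From HB Require Import structures.
From mathcomp Require Import all_boot all_order all_algebra.
From mathcomp Require Import finmap.
From mathcomp Require Import all_classical all_reals.
From mathcomp Require Import ereal.

Set Implicit Arguments.
Unset Strict Implicit.
Unset Printing Implicit Defensive.

Import Order.TTheory GRing.Theory Num.Theory.
Local Open Scope ring_scope.

(* A locally finite simple graph on a (possibly infinite) vertex type V is
   given by its neighbourhood function  N : V -> {fset V}  (finite
   neighbourhoods = local finiteness), required symmetric and irreflexive
   in the theorem statement.  Edges are the pairs {v,w} with w \in N v. *)

Section Graph.
Variable V : choiceType.
Variable N : V -> {fset V}.

Inductive reach (P : pred V) : V -> V -> Prop :=
| reach_refl v : P v -> reach P v v
| reach_step u v w : reach P u v -> w \in N v -> P w -> reach P u w.

Definition graph_connected : Prop := forall v w : V, reach predT v w.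

(* A (finite) contour is a finite connected subgraph; only its vertex set
   Gamma matters.  Connected = nonempty and its induced subgraph connected
   (a connected subgraph with vertex set Gamma exists iff this holds). *)
Definition is_finite_contour (Gamma : {fset V}) : Prop :=
  Gamma != fset0 /\
  forall u v, u \in Gamma -> v \in Gamma ->
    reach (fun x => x \in Gamma) u v.

Definition boundary_size (A : {fset V}) : nat :=
  \sum_(v <- A) #|` [fset w in N v | w \notin A]%fset |.

Definition IC (R : realType) : R :=
  inf [set (boundary_size A)%:R / (#|` A|)%:R
        | A in [set A : {fset V} | A != fset0]]%classic.

Definition broken_deg (eta : V -> bool) (v : V) : nat :=
  #|` [fset w in N v | eta v != eta w]%fset |.

Definition delta_broken (R : realType) (eta : V -> bool) : \bar R :=
  ereal_sup [set ((broken_deg eta v)%:R : R)%:E | v in [set: V]]%classic.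

Definition flip (sigma0 : V -> bool) (Gamma : {fset V}) : V -> bool :=
  fun v => if v \in Gamma then ~~ sigma0 v else sigma0 v.

Definition closed_nbhd (Gamma : {fset V}) : {fset V} :=
  (Gamma `|` \big[@fsetU _/fset0]_(v <- Gamma) N v)%fset.

(* Only edges with an endpoint in Gamma (where sigma and sigma0 differ)
   can contribute; every such edge has both endpoints in closed_nbhd Gamma,
   and the sum over unordered edges is half the sum over ordered pairs
   (v,w) with w \in N v. *)
Definition Hdiff (R : realType) (Gamma : {fset V}) (sigma sigma0 : V -> bool) : R :=
  (\sum_(v <- closed_nbhd Gamma) \sum_(w <- N v)
     (((sigma v != sigma w)%:R : R) - ((sigma0 v != sigma0 w)%:R : R))) / 2.

End Graph.

(* Main.v *)
Require Import Defs.
From HB Require Import structures.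
From mathcomp Require Import all_boot all_order all_algebra.
From mathcomp Require Import finmap.
From mathcomp Require Import all_classical all_reals.
From mathcomp Require Import ereal.
From mathcomp Require Import ring lra.
Import Order.TTheory GRing.Theory Num.Theory.
Local Open Scope ring_scope.
Lemma card_sep_sum (T : choiceType) (A : {fset T}) (P : pred T) :
  #|` [fset w in A | P w]%fset| = (\sum_(w <- A) P w)%N.
Proof.
rewrite card_fset_sum1 -big_fset_condE big_mkcond /=.
by apply: eq_bigr => i _; case: (P i).
Qed.

Lemma swap_ind (R : pzRingType) (T : choiceType) (A B : {fset T}) (F : T -> R) :
  \sum_(x <- A) (x \in B)%:R * F x = \sum_(x <- B) (x \in A)%:R * F x.
Proof.
transitivity (\sum_(x <- A) (x \in (A `&` B)%fset)%:R * F x).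
  by apply: eq_big_seq => x xA; rewrite in_fsetI xA.
transitivity (\sum_(x <- B) (x \in (A `&` B)%fset)%:R * F x); last first.
  by apply: eq_big_seq => x xB; rewrite in_fsetI xB andbT.
rewrite (@big_fset_incl _ _ _ _ A (A `|` B)%fset); first last.
  - by move=> x _ xA; rewrite in_fsetI (negbTE xA) /= mul0r.
  - exact: fsubsetUl.
rewrite [RHS](@big_fset_incl _ _ _ _ B (A `|` B)%fset) //; first last.
  - by move=> x _ xB; rewrite in_fsetI (negbTE xB) andbF /= mul0r.
  - exact: fsubsetUr.
Qed.

Lemma in_bigU (V : choiceType) (N : V -> {fset V}) (s : seq V) v x :
  v \in s -> x \in N v -> x \in \big[@fsetU _/fset0]_(u <- s) N u.
Proof.
elim: s => [//|a s IH]; rewrite inE big_cons in_fsetU => /orP[/eqP -> -> //|vs xN].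
by rewrite IH ?orbT.
Qed.

Lemma hdiff_eq (R : realType) (V : choiceType) (N : V -> {fset V})
  (N_sym : forall v w : V, (w \in N v) = (v \in N w))
  (sigma0 : V -> bool) (Gamma : {fset V}) :
  Hdiff N R Gamma (flip sigma0 Gamma) sigma0 =
  \sum_(v <- Gamma) \sum_(w <- N v)
     (w \notin Gamma)%:R * (1 - 2 * (sigma0 v != sigma0 w)%:R).
Proof.
set C := closed_nbhd N Gamma.
set g := fun v w => (1 - 2 * (sigma0 v != sigma0 w)%:R) : R.
have GC : forall v, v \in Gamma -> v \in C by move=> v vG; rewrite in_fsetU vG.
have NC : forall v w, v \in Gamma -> w \in N v -> w \in C.
  by move=> v w vG wN; rewrite in_fsetU (@in_bigU _ N _ _ _ vG wN) orbT.
have gsym : forall v w, g v w = g w v by move=> v w; rewrite /g eq_sym.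
have fdec : forall v w, ((flip sigma0 Gamma v != flip sigma0 Gamma w)%:R - (sigma0 v != sigma0 w)%:R : R)
   = ((v \in Gamma) && (w \notin Gamma))%:R * g v w + ((v \notin Gamma) && (w \in Gamma))%:R * g v w.
  move=> v w; rewrite /flip /g.
  by case: (v \in Gamma); case: (w \in Gamma); case: (sigma0 v); case: (sigma0 w); rewrite /=; lra.
rewrite /Hdiff -/C.
under eq_bigr do under eq_bigr do rewrite fdec.
under eq_bigr do rewrite big_split /=.
rewrite big_split /=.
set T := fun v => \sum_(w <- N v) (w \notin Gamma)%:R * g v w.
have S1 : \sum_(i <- C) \sum_(i0 <- N i) ((i \in Gamma) && (i0 \notin Gamma))%:R * g i i0
   = \sum_(v <- Gamma) T v.
  transitivity (\sum_(i <- C) (i \in Gamma)%:R * T i).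
    apply: eq_bigr => i _; rewrite /T mulr_sumr; apply: eq_bigr => j _.
    by case: (i \in Gamma); rewrite /= ?mul1r ?mul0r.
  rewrite swap_ind; apply: eq_big_seq => v vG.
  by rewrite GC // mul1r.
have S2 : \sum_(i <- C) \sum_(i0 <- N i) ((i \notin Gamma) && (i0 \in Gamma))%:R * g i i0
   = \sum_(v <- Gamma) T v.
  transitivity (\sum_(i <- C) \sum_(i0 <- Gamma) (i0 \in N i)%:R * ((i \notin Gamma)%:R * g i i0)).
    apply: eq_bigr => i _; rewrite -swap_ind; apply: eq_bigr => j _.
    by case: (i \in Gamma); case: (j \in Gamma); rewrite /= ?mul1r ?mul0r ?mulr0.
  rewrite exchange_big /=; apply: eq_big_seq => v vG.
  transitivity (\sum_(i <- C) (i \in N v)%:R * ((i \notin Gamma)%:R * g v i)).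
    by apply: eq_bigr => i _; rewrite N_sym gsym.
  rewrite swap_ind /T; apply: eq_big_seq => w wN.
  by rewrite (NC v w vG wN) mul1r.
rewrite S1 S2 /T /g; set X := \sum_(v <- Gamma) _.
by field; rewrite ?pnatr_eq0 ?oner_eq0.
Qed.

Theorem lemma3p3 (R : realType) (V : choiceType) (N : V -> {fset V})
  (N_sym : forall v w : V, (w \in N v) = (v \in N w))
  (N_irr : forall v : V, v \notin N v)
  (G_conn : graph_connected N)
  (sigma0 : V -> bool) (Gamma : {fset V})
  (Hcontour : is_finite_contour N Gamma) :
  (((IC N R)%:E - 2%:E * delta_broken N R sigma0) * ((#|` Gamma|)%:R : R)%:E
     <= (Hdiff N R Gamma (flip sigma0 Gamma) sigma0)%:E)%E.
Proof.
have [G0 _] := Hcontour.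
have cardG : (0 < #|` Gamma|)%N.
  by rewrite lt0n cardfs_eq0.
set n := #|` Gamma|.
set bd := fun v => broken_deg N sigma0 v.
have lowH : (boundary_size N Gamma)%:R - 2 * \sum_(v <- Gamma) ((bd v)%:R : R)
     <= Hdiff N R Gamma (flip sigma0 Gamma) sigma0.
  rewrite hdiff_eq // /boundary_size natr_sum mulr_sumr -sumrB.
  apply: ler_sum => v _.
  rewrite /bd /broken_deg (@card_sep_sum _ (N v) (fun w => w \notin Gamma))
     (@card_sep_sum _ (N v) (fun w => sigma0 v != sigma0 w)) !natr_sum mulr_sumr -sumrB.
  apply: ler_sum => w _.
  by case: (w \in Gamma); case: (sigma0 v != sigma0 w); rewrite /=; lra.
have ICle : IC N R * n%:R <= (boundary_size N Gamma)%:R.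
  rewrite -ler_pdivlMr ?ltr0n //.
  apply: ge_inf.
    exists 0 => y [A _ <-]; by rewrite divr_ge0.
  by exists Gamma.
have ub : forall v, (((bd v)%:R : R)%:E <= delta_broken N R sigma0)%E.
  by move=> v; apply: ereal_sup_ubound; exists v.
have [v0 v0G] := fset0Pn _ G0.
case E: (delta_broken N R sigma0) => [d| |].
- rewrite -EFinM lee_fin.
  have Sle : \sum_(v <- Gamma) ((bd v)%:R : R) <= n%:R * d.
    have -> : n%:R * d = \sum_(v <- Gamma) d.
      by rewrite /n card_fset_sum1 natr_sum mulr_suml; under eq_bigr do rewrite mul1r.
    by apply: ler_sum => v _; have := ub v; rewrite E lee_fin.
  rewrite mulrBl; nra.
- rewrite gt0_muley ?lte_fin //= gt0_mulNye ?lte_fin ?ltr0n // leNye //.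
- by have := ub v0; rewrite E leeNy_eq.
Qed.
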